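(* Let $G=(V,E,w)$, $s$, $\tau$ (with $|\tau|\ge 2$) and a budget $b\ge 0$ be as in the context, and suppose that at least one feasible subgraph exists. Then among the maximizers of $\textsc{CD}_{\tau,s}(S)$ over all feasible subgraphs $S\subseteq G$, there is one that is a tree rooted at $s$, i.e. an out-arborescence rooted at $s$ (its underlying undirected graph is a tree, $s$ has in-degree $0$ and every other vertex has in-degree $1$).
   Context: Let $G=(V,E,w)$ be a finite directed graph with non-negative edge weights $w:E\to\mathbb{R}_{\ge 0}$. A path from $u$ to $v$ in a subgraph $S\subseteq G$ is a sequence $u=v_0\to v_1\to\cdots\to v_k=v$ ($k\ge 0$) with each $v_i\to v_{i+1}$ an edge of $S$; for $i\le j$, $w_P(v_i,v_j)=\sum_{m=i}^{j-1} w(v_m\to v_{m+1})$. A vertex $y$ is reachable from $x$ in $S$ if there is a path from $x$ to $y$ in $S$ (a vertex is reachable from itself). Fix a start vertex $s\in V$ and a finite target set $\tau\subseteq V\setminus\{s\}$ with $|\tau|\ge 2$. The cost of a subgraph $S$ is $w(S)=\sum_{e\in E(S)} w(e)$. For a subgraph $S$ containing $s$ and $\tau$ in which every target is reachable from $s$: for a path $P=v_0\to\cdots\to v_k$ in $S$ with $v_0=s$, $v_k=t\in\tau$, let $\ell$ be the largest index such that some target in $\tau\setminus\{t\}$ is reachable from $v_\ell$ in $S$; the last deceptive point is $l(P,t)=v_\ell$. The unique distance of $t\in\tau$ is $\textsc{U}_S(t)=\min\{w_P(l(P,t),t): P \text{ a path in } S \text{ from } s \text{ to } t\}$, and the counterdeceptiveness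 of $S$ is $\textsc{CD}_{\tau,s}(S)=\min_{t\in\tau}\textsc{U}_S(t)$. Given a budget $b\ge 0$, a subgraph $S\subseteq G$ is feasible if $s\in V(S)$, $\tau\subseteq V(S)$, every target is reachable from $s$ in $S$, and $w(S)\le b$. A maximizer is a feasible $S$ maximizing $\textsc{CD}_{\tau,s}(S)$ among feasible subgraphs. *)

(* Defs.v *)
From HB Require Import structures.
From mathcomp Require Import all_boot all_order all_algebra.
From mathcomp Require Import reals.
Set Implicit Arguments. Unset Strict Implicit. Unset Printing Implicit Defensive.
Import Order.TTheory GRing.Theory Num.Theory.
Local Open Scope ring_scope.

(* A directed graph G = (V, E, w): vertices are the elements of a finType V,
   edges are a set E of ordered pairs (u, v) (edge u -> v), weights w. *)

Record subgraph (V : finType) := Subgraph { sV : {set V}; sE : {set V * V} }.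

Section Defs.
Variables (V : finType) (R : realType).

Definition is_subgraph (E : {set V * V}) (S : subgraph V) : Prop :=
  sE S \subset E /\ (forall x y, (x, y) \in sE S -> (x \in sV S) /\ (y \in sV S)).

Definition sedge (S : subgraph V) : rel V := fun x y => (x, y) \in sE S.

Definition reach (S : subgraph V) (x y : V) : bool := connect (sedge S) x y.

Definition cost (w : V * V -> R) (S : subgraph V) : R := \sum_(e in sE S) w e.

(* A path s = v_0 -> v_1 -> ... -> v_k = t in S is represented by p with
   s :: p = [v_0; ...; v_k]; it is a path in S from s to t iff
   path (sedge S) s p and last s p = t. *)
Definition is_path_in (S : subgraph V) (s t : V) (p : seq V) : bool :=
  path (sedge S) s p && (last s p == t).

(* Index l of the last deceptive point of the path s :: p towards target t:
   the largest index i <= k such that some target t' in tau, t' <> t,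
   is reachable in S from v_i. *)
Definition last_dec_idx (S : subgraph V) (tau : {set V}) (s t : V) (p : seq V)
  : nat :=
  \max_(i < (size p).+1 |
          [exists t' in tau, (t' != t) && reach S (nth s (s :: p) i) t']) (i : nat).

(* w_P(v_i, v_k) = sum of weights of the edges v_j -> v_{j+1}, i <= j < k. *)
Definition wP_suffix (w : V * V -> R) (s : V) (p : seq V) (i : nat) : R :=
  \sum_(i <= j < size p) w (nth s (s :: p) j, nth s (s :: p) j.+1).

Definition dec_suffix_weight (w : V * V -> R) (S : subgraph V) (tau : {set V})
  (s t : V) (p : seq V) : R :=
  wP_suffix w s p (last_dec_idx S tau s t p).

Definition is_unique_dist (w : V * V -> R) (S : subgraph V) (tau : {set V})
  (s t : V) (u : R) : Prop :=
  (exists p, is_path_in S s t p /\ dec_suffix_weight w S tau s t p = u) /\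
  (forall p, is_path_in S s t p -> u <= dec_suffix_weight w S tau s t p).

Definition is_CD (w : V * V -> R) (S : subgraph V) (tau : {set V}) (s : V)
  (c : R) : Prop :=
  (forall t, t \in tau -> exists u, is_unique_dist w S tau s t u) /\
  (exists t, t \in tau /\ is_unique_dist w S tau s t c) /\
  (forall t u, t \in tau -> is_unique_dist w S tau s t u -> c <= u).

Definition feasible (E : {set V * V}) (w : V * V -> R) (s : V) (tau : {set V})
  (b : R) (S : subgraph V) : Prop :=
  [/\ is_subgraph E S, s \in sV S, tau \subset sV S,
      (forall t, t \in tau -> reach S s t) & cost w S <= b].

Definition uadj (S : subgraph V) : rel V :=
  fun x y => ((x, y) \in sE S) || ((y, x) \in sE S).

(* Covers self-loops (m = 1) and antiparallel
   edge pairs (m = 2). *)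
Definition has_ucycle (S : subgraph V) : Prop :=
  exists (x0 : V) (es : seq (V * V)) (vs : seq V),
    [/\ (0 < size es)%N /\ size vs = size es, uniq es, uniq vs,
        all (fun e => e \in sE S) es &
        forall i, (i < size es)%N ->
          let a := nth x0 vs i in
          let b := nth x0 vs ((i.+1) %% size es) in
          (nth (x0, x0) es i == (a, b)) || (nth (x0, x0) es i == (b, a))].

Definition is_undirected_tree (S : subgraph V) : Prop :=
  (forall x y, x \in sV S -> y \in sV S -> connect (uadj S) x y) /\ not (has_ucycle S).

Definition indeg (S : subgraph V) (v : V) : nat :=
  #|[set e in sE S | e.2 == v]|.

Definition is_arborescence (S : subgraph V) (s : V) : Prop :=
  [/\ s \in sV S, is_undirected_tree S, indeg S s = 0%N &
      forall v, v \in sV S -> v != s -> indeg S v = 1%N].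

End Defs.

(* Main.v *)
Require Import Defs.
From HB Require Import structures.
From mathcomp Require Import all_boot all_order all_algebra.
From mathcomp Require Import reals.
From mathcomp Require Import zify.
From Stdlib Require Import Classical.
Import Order.TTheory GRing.Theory Num.Theory.
Local Open Scope ring_scope.

Lemma fin_max (R : realType) (A : eqType) (F : A -> R -> Prop) (l : seq A) :
  (forall x c c', F x c -> F x c' -> c = c') ->
  (exists x c, x \in l /\ F x c) ->
  exists x c, F x c /\ (forall y c', y \in l -> F y c' -> c' <= c).
Proof.
move=> Ffun; elim: l => [|a l IH]; first by case=> x [c []].
case=> x0 [c0 [Hx0 Fx0]].
case: (classic (exists x c, x \in l /\ F x c)) => [/IH [x [c [Fxc Hmax]]]|Hno].
- case: (classic (exists ca, F a ca)) => [[ca Fa]|Hna].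
  + have [h|h] := leP c ca.
    * exists a, ca; split=> // y c'; rewrite in_cons => /orP [/eqP ->|Hy] Fy.
      - by rewrite (Ffun _ _ _ Fy Fa).
      - exact: le_trans (Hmax _ _ Hy Fy) h.
    * exists x, c; split=> // y c'; rewrite in_cons => /orP [/eqP ->|Hy] Fy.
      - by rewrite (Ffun _ _ _ Fy Fa); exact: ltW.
      - exact: (Hmax _ _ Hy Fy).
  + exists x, c; split=> // y c'; rewrite in_cons => /orP [/eqP ->|Hy] Fy.
      - by case: Hna; exists c'.
      - exact: (Hmax _ _ Hy Fy).
- move: Hx0; rewrite in_cons => /orP [/eqP Ex0|Hx0]; last by case: Hno; exists x0, c0.
  subst x0. exists a, c0; split=> // y c'; rewrite in_cons => /orP [/eqP ->|Hy] Fy.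
  + by rewrite (Ffun _ _ _ Fy Fx0).
  + by case: Hno; exists y, c'.
Qed.

Lemma ldi_le (V : finType) (S : subgraph V) tau s t p :
  (last_dec_idx S tau s t p <= size p)%N.
Proof. rewrite /last_dec_idx; apply/bigmax_leqP => i _; by rewrite -ltnS. Qed.

Lemma ldi_mono (V : finType) (S T : subgraph V) tau s t p :
  {subset sE T <= sE S} ->
  (last_dec_idx T tau s t p <= last_dec_idx S tau s t p)%N.
Proof.
move=> sub; rewrite /last_dec_idx; apply/bigmax_leqP => i /existsP [t' /andP [Ht' /andP [Hne Hr]]].
apply: (leq_bigmax_cond (F := fun i : 'I_ _ => nat_of_ord i)).
apply/existsP; exists t'; rewrite Ht' Hne /=.
move: Hr; rewrite /reach; apply: connect_sub => x y Hxy; apply: connect1; exact: sub.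
Qed.

Lemma wP_mono (V : finType) (R : realType) (w : V * V -> R) (s : V) p i j :
  (forall k, (k < size p)%N -> 0 <= w (nth s (s :: p) k, nth s (s :: p) k.+1)) ->
  (i <= j <= size p)%N -> wP_suffix w s p j <= wP_suffix w s p i.
Proof.
move=> H /andP [hij hj]; rewrite /wP_suffix (big_cat_nat hij hj) /= lerDr.
rewrite big_seq_cond; apply: sumr_ge0 => k /andP [hk _]; apply: H.
by move: hk; rewrite mem_index_iota => /andP [_ hk]; exact: leq_trans hk hj.
Qed.

Lemma CD_mono (V : finType) (R : realType) (w : V * V -> R) (S T : subgraph V) tau s c c' :
  {subset sE T <= sE S} -> (forall e, e \in sE T -> 0 <= w e) ->
  is_CD w T tau s c -> is_CD w S tau s c' -> c' <= c.
Proof.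
move=> sub wnn [_ [[t0 [Ht0 [[p [Hp Hpc]] _]]] _]] [HS [_ HSmin]].
have [u Hud] := HS t0 Ht0.
have HpS : is_path_in S s t0 p.
  move: Hp; rewrite /is_path_in => /andP [Hp ->]; rewrite andbT.
  by apply: sub_path Hp => x y; apply: sub.
rewrite -Hpc; apply: (le_trans (HSmin _ _ Ht0 Hud)); apply: le_trans (Hud.2 _ HpS) _.
rewrite /dec_suffix_weight; apply: wP_mono.
- move: Hp => /andP [/(pathP s) Hp _] k hk; apply: wnn; exact: Hp.
- by rewrite ldi_mono // ldi_le.
Qed.

Lemma argmax_nat (f : nat -> nat) m : (0 < m)%N ->
  exists i, (i < m)%N /\ forall j, (j < m)%N -> (f j <= f i)%N.
Proof.
elim: m => // -[|m] IH _.
  by exists 0%N; split=> // j; rewrite ltnS leqn0 => /eqP ->.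
have [i [hi hmax]] := IH erefl.
case: (leqP (f m.+1) (f i)) => h.
- exists i; split; first by lia.
  move=> j; rewrite ltnS leq_eqVlt => /orP [/eqP ->|hj] //; exact: hmax.
- exists m.+1; split=> // j; rewrite ltnS leq_eqVlt => /orP [/eqP ->|hj] //.
  exact: leq_trans (hmax _ hj) (ltnW h).
Qed.

Lemma no_ucycle_gen (V : finType) (T : subgraph V) (d : V -> nat) (par : V -> V) :
  (forall x y, (x, y) \in sE T -> (d x).+1 = d y /\ x = par y) -> ~ has_ucycle T.
Proof.
move=> Hed [x0 [es [vs [[Hm Hsz] Hues _ Hall Hcyc]]]].
set m := size es in Hm Hsz Hcyc.
have [i0 [hi0 hmax]] := @argmax_nat (fun i => d (nth x0 vs i)) m Hm.
set v := nth x0 vs i0 in hmax.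
have HinT k : (k < m)%N -> nth (x0, x0) es k \in sE T.
  by move=> hk; apply: (allP Hall); apply: mem_nth.
have Hmod k : ((k.+1 %% m) < m)%N by apply: ltn_pmod.
have E1 : nth (x0, x0) es i0 = (nth x0 vs ((i0.+1) %% m), v).
  move: (Hcyc i0 hi0); cbv zeta => /orP [/eqP h|/eqP h]; last exact h.
  have := HinT i0 hi0; rewrite h => /Hed -[hd _].
  have := hmax _ (Hmod i0); rewrite /= -hd /v => h'; exfalso; lia.
have [j [hj hj1]] : exists j, (j < m)%N /\ (j.+1 %% m = i0)%N.
  case: (eqVneq i0 0%N) => [->|hne].
  - exists m.-1; split; first by lia.
    by rewrite prednK // modnn.
  - exists i0.-1; split; first by lia.
    by rewrite prednK ?lt0n // modn_small.
have E2 : nth (x0, x0) es j = (nth x0 vs j, v).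
  move: (Hcyc j hj); cbv zeta; rewrite hj1 => /orP [/eqP h|/eqP h]; first exact h.
  have := HinT j hj; rewrite h => /Hed -[hd _].
  have := hmax _ hj; rewrite -hd /v => h'; exfalso; lia.
have [hd1 hp1] : _ /\ _ := Hed _ _ (etrans (esym (congr1 (fun e => e \in sE T) E1)) (HinT i0 hi0)).
have [hd2 hp2] : _ /\ _ := Hed _ _ (etrans (esym (congr1 (fun e => e \in sE T) E2)) (HinT j hj)).
have Eij : i0 = j.
  apply/eqP; rewrite -(nth_uniq (x0, x0) hi0 hj Hues) E1 E2 hp1 hp2 //.
subst j.
move: hd1; rewrite hj1 /v; lia.
Qed.

Lemma path_uniq_gen (V : finType) (T : subgraph V) (s : V) (par : V -> V) :
  (forall x y, (x, y) \in sE T -> y != s /\ x = par y) ->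
  forall p1 p2, path (sedge T) s p1 -> path (sedge T) s p2 ->
    last s p1 = last s p2 -> p1 = p2.
Proof.
move=> H p1; elim/last_ind: p1 => [|q1 y1 IH] p2; case/lastP: p2 => [|q2 y2] //.
- move=> _; rewrite rcons_path => /andP [_ he]; rewrite last_rcons /= => hs.
  by move: (H _ _ he) => [hne _]; rewrite -hs eqxx in hne.
- rewrite rcons_path => /andP [_ he] _; rewrite last_rcons /= => hs.
  by move: (H _ _ he) => [hne _]; rewrite hs eqxx in hne.
- rewrite !rcons_path => /andP [hq1 he1] /andP [hq2 he2]; rewrite !last_rcons => hy.
  subst y2; have [_ e1] := H _ _ he1; have [_ e2] := H _ _ he2.
  by rewrite (IH q2) // e1 e2.
Qed.

Definition rpath {V : finType} (S : subgraph V) (s v : V) (n : nat) : bool :=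
  ~~ reach S s v || [exists q : n.-tuple V, path (sedge S) s q && (last s q == v)].

Lemma rpath_ex {V : finType} (S : subgraph V) (s v : V) : exists n, rpath S s v n.
Proof.
case: (boolP (reach S s v)) => h; last by exists 0%N; rewrite /rpath h.
move: h; rewrite /reach => /connectP [p hp hl]; exists (size p); apply/orP; right.
apply/existsP; exists (in_tuple p); by rewrite /= hp -hl eqxx.
Qed.

Definition dep {V : finType} (S : subgraph V) (s v : V) : nat := ex_minn (rpath_ex S s v).

Lemma dep_min {V : finType} {S : subgraph V} {s v : V} q :
  path (sedge S) s q -> last s q = v -> (dep S s v <= size q)%N.
Proof.
move=> hq hl; rewrite /dep; case: ex_minnP => m _ hmin; apply: hmin.
apply/orP; right; apply/existsP; exists (in_tuple q); by rewrite /= hq hl eqxx.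
Qed.

Lemma dep_path {V : finType} {S : subgraph V} {s v : V} : reach S s v ->
  exists q, [/\ path (sedge S) s q, last s q = v & size q = dep S s v].
Proof.
move=> hr; rewrite /dep; case: ex_minnP => m; rewrite /rpath hr /= => /existsP [q /andP [hq /eqP hl]] _.
by exists q; rewrite size_tuple.
Qed.

Definition par {V : finType} (S : subgraph V) (s v : V) : V :=
  odflt s [pick u | ((u, v) \in sE S) && reach S s u && ((dep S s u).+1 == dep S s v)].

Lemma par_ex {V : finType} {S : subgraph V} {s v : V} : reach S s v -> v != s ->
  exists u, ((u, v) \in sE S) && reach S s u && ((dep S s u).+1 == dep S s v).
Proof.
move=> hr hne; have [q [hq hl hs]] := dep_path hr.
case/lastP: q hq hl hs => [|q y] hq hl hs; first by move: hne; rewrite -hl /= eqxx.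
rewrite last_rcons in hl; subst y.
move: hq; rewrite rcons_path => /andP [hq he].
have he' : (last s q, v) \in sE S := he.
exists (last s q); rewrite he' /=.
have hr' : reach S s (last s q) by apply/connectP; exists q.
rewrite hr' /=.
have h1 := dep_min _ hq erefl.
have h2 : (dep S s v <= (dep S s (last s q)).+1)%N.
  have [q' [hq' hl' hs']] := dep_path hr'.
  rewrite -hs' -(size_rcons q' v); apply: dep_min; last by rewrite last_rcons.
  by rewrite rcons_path hq' hl'.
rewrite size_rcons in hs; apply/eqP; lia.
Qed.

Lemma par_spec {V : finType} {S : subgraph V} {s v : V} : reach S s v -> v != s ->
  [/\ (par S s v, v) \in sE S, reach S s (par S s v) & (dep S s (par S s v)).+1 = dep S s v].
Proof.
move=> hr hne; rewrite /par; case: pickP => [u /andP [/andP [h1 h2] /eqP h3]|H] //=.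
by have [u hu] := par_ex hr hne; rewrite H in hu.
Qed.

Definition tsub {V : finType} (S : subgraph V) (s : V) : subgraph V :=
  Subgraph [set v | reach S s v]
   [set e in sE S | (e.2 != s) && reach S s e.2 && (e.1 == par S s e.2)].

Lemma tsub_edge {V : finType} {S : subgraph V} {s x y : V} :
  (x, y) \in sE (tsub S s) ->
  [/\ (x, y) \in sE S, y != s, reach S s y & x = par S s y].
Proof. by rewrite inE /= => /andP [h1 /andP [/andP [h2 h3] /eqP h4]]. Qed.

Lemma tsub_par_in {V : finType} {S : subgraph V} {s y : V} :
  reach S s y -> y != s -> (par S s y, y) \in sE (tsub S s).
Proof.
move=> hr hne; have [h1 _ _] := par_spec hr hne.
by rewrite inE /= h1 hne hr eqxx.
Qed.

Lemma tsub_dep {V : finType} {S : subgraph V} {s x y : V} :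
  (x, y) \in sE (tsub S s) -> (dep S s x).+1 = dep S s y /\ x = par S s y.
Proof.
move=> /tsub_edge [_ hne hr ->]; split=> //.
by have [_ _ ->] := par_spec hr hne.
Qed.

Lemma tsub_reach {V : finType} {S : subgraph V} {s v : V} :
  reach S s v -> connect (sedge (tsub S s)) s v.
Proof.
suff H : forall n v, (dep S s v <= n)%N -> reach S s v -> connect (sedge (tsub S s)) s v.
  by apply: (H (dep S s v)).
elim=> [|n IH] v' hn hr; case: (eqVneq v' s) => [->|hne]; rewrite ?connect0 //.
- by have [_ _ h] := par_spec hr hne; rewrite -h in hn.
- have [_ hr' h] := par_spec hr hne.
  apply: connect_trans (IH _ _ hr') (connect1 _); first by rewrite -ltnS h.
  exact: tsub_par_in.
Qed.

Lemma tsub_arb {V : finType} (S : subgraph V) (s : V) : is_arborescence (tsub S s) s.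
Proof.
split.
- by rewrite inE /reach connect0.
- split.
  + move=> x y; rewrite !inE => hx hy.
    have sym : connect_sym (uadj (tsub S s)).
      by apply: sym_connect_sym => a b; rewrite /uadj orbC.
    have H z : reach S s z -> connect (uadj (tsub S s)) s z.
      move=> hz; apply: connect_sub (tsub_reach hz) => a b hab; apply: connect1.
      by rewrite /uadj; apply/orP; left.
    by apply: connect_trans (H _ hy); rewrite sym; apply: H.
  + apply: (@no_ucycle_gen _ _ (dep S s) (par S s)) => x y /tsub_dep.
    done.
- rewrite /indeg; apply/eqP; rewrite cards_eq0; apply/eqP/setP => -[x y].
  rewrite in_set0; apply/negP; rewrite inE => /andP [he /eqP hs] /=.
  have [_ hne _ _] := tsub_edge he; move: hs => /= hs; by rewrite hs eqxx in hne.
- move=> v; rewrite inE => hr hne; rewrite /indeg.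
  rewrite (_ : [set e in sE (tsub S s) | e.2 == v] = [set (par S s v, v)]) ?cards1 //.
  apply/setP => -[x y]; rewrite inE in_set1; apply/andP/eqP.
  + move=> [he /eqP /= hy]; subst y; have [_ _ _ ->] := tsub_edge he; done.
  + by case=> -> ->; rewrite tsub_par_in.
Qed.

Lemma cost_sub (R : realType) (V : finType) (w : V * V -> R) (S T : subgraph V) :
  {subset sE T <= sE S} -> (forall e, e \in sE S -> 0 <= w e) -> cost w T <= cost w S.
Proof.
move=> sub wnn; rewrite /cost [X in _ <= X](bigID (fun e => e \in sE T)) /=.
rewrite -[X in X <= _]addr0; apply: lerD.
- rewrite le_eqVlt; apply/orP; left; apply/eqP; apply: eq_bigl => e.
  by case: (boolP (e \in sE T)) => h; rewrite ?andbF ?andbT ?(sub _ h).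
- apply: sumr_ge0 => e /andP [h _]; exact: wnn.
Qed.

Lemma tsub_feas (R : realType) (V : finType) (E : {set V * V}) (w : V * V -> R) (s : V) (tau : {set V}) (b : R) (S : subgraph V) :
  (forall e, e \in E -> 0 <= w e) -> feasible E w s tau b S ->
  feasible E w s tau b (tsub S s).
Proof.
move=> wnn [[hSE hSV] hs htau hreach hcost]; split.
- split.
  + apply/subsetP => -[x y] /tsub_edge [h _ _ _]; exact: (subsetP hSE).
  + move=> x y /tsub_edge [hxy hne hry hx]; rewrite !inE hry; split=> //.
    by rewrite hx; case: (par_spec hry hne).
- by rewrite inE /reach connect0.
- by apply/subsetP => t ht; rewrite inE hreach.
- move=> t ht; exact: tsub_reach (hreach t ht).
- apply: le_trans hcost; apply: cost_sub.
  + by move=> -[x y] /tsub_edge [].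
  + move=> e he; apply: wnn; exact: (subsetP hSE).
Qed.

Lemma ud_fun (R : realType) (V : finType) (w : V * V -> R) (S : subgraph V) (tau : {set V}) (s t : V) (u u' : R) :
  is_unique_dist w S tau s t u -> is_unique_dist w S tau s t u' -> u = u'.
Proof.
move=> [[p [hp hu]] hmin] [[p' [hp' hu']] hmin']; apply: le_anti.
by rewrite -{1}hu' -{2}hu hmin // hmin'.
Qed.

Lemma CD_fun (R : realType) (V : finType) (w : V * V -> R) (S : subgraph V) (tau : {set V}) (s : V) (c c' : R) :
  is_CD w S tau s c -> is_CD w S tau s c' -> c = c'.
Proof.
move=> [_ [[t [ht hud]] hmin]] [_ [[t' [ht' hud']] hmin']]; apply: le_anti.
by rewrite (hmin _ _ ht' hud') (hmin' _ _ ht hud).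
Qed.

Lemma tsub_CD (R : realType) (V : finType) (w : V * V -> R) (S : subgraph V) (s : V) (tau : {set V}) :
  (exists t, t \in tau) -> (forall t, t \in tau -> reach S s t) ->
  exists c, is_CD w (tsub S s) tau s c.
Proof.
move=> [t0 ht0] hreach.
have Hu : forall t, t \in tau -> exists u, is_unique_dist w (tsub S s) tau s t u.
  move=> t ht; have /connectP [p hp hl] := tsub_reach (hreach t ht).
  exists (dec_suffix_weight w (tsub S s) tau s t p); split.
    by exists p; rewrite /is_path_in hp -hl eqxx.
  move=> p' /andP [hp' /eqP hl'].
  rewrite (@path_uniq_gen _ (tsub S s) s (par S s) _ p' p hp' hp) //; last by rewrite hl'.
  by move=> x y /tsub_edge [_ hne _ ->].
pose F t c := t \in tau /\ is_unique_dist w (tsub S s) tau s t (- c).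
have HF : exists x c, F x c /\ (forall y c', y \in enum tau -> F y c' -> c' <= c).
  apply: fin_max.
  - move=> x c c' [_ h] [_ h']; apply: oppr_inj; exact: ud_fun h h'.
  - have [u hu] := Hu t0 ht0; exists t0, (- u); split; first by rewrite mem_enum. by split; rewrite /F ?opprK.
have [t1 [c1 [[ht1 hud1] hmax]]] := HF.
exists (- c1); split=> //; split; first by exists t1.
move=> t u ht hud; rewrite lerNl; apply: (hmax t); first by rewrite mem_enum.
by split=> //; rewrite opprK.
Qed.

Theorem lemma3 (R : realType) (V : finType) (E : {set V * V}) (w : V * V -> R)
  (s : V) (tau : {set V}) (b : R) :
  (forall e, e \in E -> 0 <= w e) ->
  s \notin tau ->
  (2 <= #|tau|)%N ->
  0 <= b ->
  (exists S : subgraph V, feasible E w s tau b S) ->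
  exists S : subgraph V,
    [/\ feasible E w s tau b S,
        is_arborescence S s &
        exists c : R, is_CD w S tau s c /\
          (forall (S' : subgraph V) (c' : R),
             feasible E w s tau b S' -> is_CD w S' tau s c' -> c' <= c)].
Proof.
move=> wnn _ htau _ [S0 hS0].
have tau_ne : exists t, t \in tau.
  have : (0 < #|tau|)%N by lia.
  by rewrite card_gt0 => /set0Pn.
pose F (x : ({set V} * {set V * V})%type) (c : R) :=
  [/\ feasible E w s tau b (Subgraph x.1 x.2), is_arborescence (Subgraph x.1 x.2) s
    & is_CD w (Subgraph x.1 x.2) tau s c].
have good : forall S, feasible E w s tau b S ->
    exists c, F (sV (tsub S s), sE (tsub S s)) c.
  move=> S hS; have [_ _ _ hr _] := hS.
  have [c hc] := @tsub_CD R V w S s tau tau_ne hr.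
  exists c; split=> //=; [exact: tsub_feas | exact: tsub_arb].
have HF : exists x c, F x c /\
    (forall y c', y \in enum [set: ({set V} * {set V * V})%type] -> F y c' -> c' <= c).
  apply: fin_max.
  - by move=> x c c' [_ _ h] [_ _ h']; exact: CD_fun h h'.
  - have [c hc] := good _ hS0; exists (sV (tsub S0 s), sE (tsub S0 s)), c.
    by rewrite mem_enum inE.
have [x [c [[hf ha hc] hmax]]] := HF.
exists (Subgraph x.1 x.2); split=> //; exists c; split=> //.
move=> S' c' hS' hc'.
have [cT hT] := good _ hS'.
have hle : c' <= cT.
  have [_ _ hcT] := hT.
  apply: (@CD_mono V R w S' (tsub S' s) tau s cT c' _ _ hcT hc').
  - by move=> -[x1 y1] /tsub_edge [].
  - have [[hSE _] _ _ _ _] := hS'.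
    move=> e he; apply: wnn.
    apply: (subsetP hSE); case: e he => x1 y1 /tsub_edge []; done.
apply: le_trans hle _; apply: hmax hT; by rewrite mem_enum inE.
Qed.
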